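(* Let $G=(V,E)$ be a finite connected graph satisfying CD$(F;0)$ for some CD-function $F$, with relaxation function $\varphi$. Let $u:[0,\infty)\times V\to(0,\infty)$ solve the heat equation on $G$. Then for all $0<t_1<t_2$ and $x_1,x_2\in V$, $$u(t_1,x_1)\le u(t_2,x_2)\exp\Big(\int_{t_1}^{t_2}\varphi(t)\,dt\Big)\exp\Big(\frac{2\mu_{max}\,d(x_1,x_2)^2}{w_{min}(t_2-t_1)}\Big),$$ where $\mu_{max}=\max_V\mu$, $w_{min}=\min_{xy\in E}w_{xy}$ and $d$ is the combinatorial graph distance.
   Context: Graphs are undirected and locally finite; $x\sim y$ means $xy\in E$; each edge has a weight $w_{xy}=w_{yx}>0$; $\mu:V\to(0,\infty)$. The Laplacian is $\Delta u(x)=\frac1{\mu(x)}\sum_{y\sim x}w_{xy}(u(y)-u(x))$ and $L:=-\Delta$. For $H:\mathbb R\to\mathbb R$, $\Psi_H(v)(x)=\frac1{\mu(x)}\sum_{y\sim x}w_{xy}H(v(y)-v(x))$; $\Upsilon(z)=e^z-1-z$. A CD-function is a continuous $F:[0,\infty)\to[0,\infty)$ with $F(0)=0$, $F(x)/x$ strictly increasing on $(0,\infty)$, $\int_1^\infty dr/F(r)<\infty$. Its relaxation function is the unique positive solution $\varphi$ on $(0,\infty)$ of $\dot\varphi+F(\varphi)=0$ with $\varphi(0+)=\infty$. $G$ satisfies CD$(F;0)$ if for every $x\in V$ and every $v:V\to\mathbb R$ with $Lv(x)>0$ and $Lv(x)\ge Lv(y)$ for all $y\sim x$, one has $\Delta\Psi_{\Upsilon'}(v)(x)\ge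 F(Lv(x))$. A solution of the heat equation is $u(t,x)$, $C^1$ in $t$, with $\partial_tu=\Delta u$ on $[0,\infty)\times V$. *)

(* Defs.v *)
From Stdlib Require Import Reals Lra List.
Import ListNotations.
Open Scope R_scope.

(* A finite weighted graph on a type V: [enum] lists every vertex exactly once,
   [w x y] is the edge weight, with x ~ y  iff  w x y > 0 (w = 0 off edges),
   [mu] the positive vertex measure. *)
Definition weighted_graph {V : Type} (enum : list V) (w : V -> V -> R) (mu : V -> R) : Prop :=
  NoDup enum /\ (forall x, In x enum) /\
  (forall x y, w x y = w y x) /\ (forall x y, 0 <= w x y) /\
  (forall x, w x x = 0) /\ (forall x, 0 < mu x).

Definition adj {V : Type} (w : V -> V -> R) (x y : V) : Prop := 0 < w x y.

Definition sumV {V : Type} (enum : list V) (f : V -> R) : R :=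
  fold_right (fun y acc => f y + acc) 0 enum.

Definition Lap {V : Type} (enum : list V) (w : V -> V -> R) (mu : V -> R)
  (u : V -> R) (x : V) : R :=
  / mu x * sumV enum (fun y => w x y * (u y - u x)).

Definition PsiH {V : Type} (enum : list V) (w : V -> V -> R) (mu : V -> R)
  (H : R -> R) (v : V -> R) (x : V) : R :=
  / mu x * sumV enum (fun y => w x y * H (v y - v x)).

Definition Upsilon (z : R) : R := exp z - 1 - z.
Definition Upsilon' (z : R) : R := exp z - 1.

Definition CD0 {V : Type} (enum : list V) (w : V -> V -> R) (mu : V -> R)
  (F : R -> R) : Prop :=
  forall (x : V) (v : V -> R),
    0 < - Lap enum w mu v x ->
    (forall y, adj w x y -> - Lap enum w mu v y <= - Lap enum w mu v x) ->
    F (- Lap enum w mu v x) <= Lap enum w mu (PsiH enum w mu Upsilon' v) x.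

Definition improper_integrable (f : R -> R) (a : R) : Prop :=
  (forall b, a <= b -> inhabited (Riemann_integrable f a b)) /\
  exists l : R, forall eps, 0 < eps -> exists M, forall b (pr : Riemann_integrable f a b),
      M <= b -> a <= b -> Rabs (RiemannInt pr - l) < eps.

(* CD-function (F only matters on [0,oo)) *)
Definition CD_function (F : R -> R) : Prop :=
  (forall x, 0 < x -> continuity_pt F x) /\
  (forall eps, 0 < eps -> exists delta, 0 < delta /\
      forall x, 0 <= x < delta -> Rabs (F x - F 0) < eps) /\
  F 0 = 0 /\
  (forall x, 0 <= x -> 0 <= F x) /\
  (forall x y, 0 < x -> x < y -> F x / x < F y / y) /\
  improper_integrable (fun r => / F r) 1.

Definition relaxation_function (F phi : R -> R) : Prop :=
  (forall t, 0 < t -> 0 < phi t) /\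
  (forall t, 0 < t -> derivable_pt_lim phi t (- F (phi t))) /\
  (forall M, exists delta, 0 < delta /\ forall t, 0 < t < delta -> M < phi t).

Definition heat_solution {V : Type} (enum : list V) (w : V -> V -> R) (mu : V -> R)
  (u : R -> V -> R) : Prop :=
  (forall x t, 0 < t -> derivable_pt_lim (fun s => u s x) t (Lap enum w mu (u t) x)) /\
  (forall x eps, 0 < eps -> exists delta, 0 < delta /\ forall h, 0 < h < delta ->
      Rabs ((u h x - u 0 x) / h - Lap enum w mu (u 0) x) < eps).

Inductive walk {V : Type} (w : V -> V -> R) : V -> V -> nat -> Prop :=
| walk_nil : forall x, walk w x x 0
| walk_cons : forall x z y n, adj w x z -> walk w z y n -> walk w x y (S n).

Definition connected {V : Type} (w : V -> V -> R) : Prop :=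
  forall x y : V, exists n, walk w x y n.

Definition is_dist {V : Type} (w : V -> V -> R) (x y : V) (n : nat) : Prop :=
  walk w x y n /\ forall m, walk w x y m -> (n <= m)%nat.

(* mu_max = max_V mu  (V nonempty, mu > 0) *)
Definition mu_max {V : Type} (enum : list V) (mu : V -> R) : R :=
  fold_right (fun x m => Rmax (mu x) m) 0 enum.

(* w_min = min over edges of w_xy (dummy value 1 if there are no edges) *)
Definition edge_weights {V : Type} (enum : list V) (w : V -> V -> R) : list R :=
  flat_map (fun x => flat_map (fun y =>
     if Rlt_dec 0 (w x y) then [w x y] else []) enum) enum.

Definition w_min {V : Type} (enum : list V) (w : V -> V -> R) : R :=
  match edge_weights enum w with
  | [] => 1
  | a :: l => fold_right Rmin a l
  end.

(* Main.v *)
Require Import Defs.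
From Stdlib Require Import Reals List Lra Lia Classical.
From Coquelicot Require Import Coquelicot.
Open Scope R_scope.

Section SumV.
Context {V : Type}.

Lemma sumV_ext (l : list V) f g : (forall y, f y = g y) -> sumV l f = sumV l g.
Proof. intros H; induction l; simpl; [reflexivity| rewrite H, IHl; reflexivity]. Qed.

Lemma sumV_scal (l : list V) c f : sumV l (fun y => c * f y) = c * sumV l f.
Proof. induction l; simpl; [ring| rewrite IHl; ring]. Qed.

Lemma sumV_plus (l : list V) f g : sumV l (fun y => f y + g y) = sumV l f + sumV l g.
Proof. induction l; simpl; [ring| rewrite IHl; ring]. Qed.

Lemma sumV_nonneg (l : list V) f : (forall y, 0 <= f y) -> 0 <= sumV l f.
Proof. intros H; induction l; simpl; [lra| specialize (H a); lra]. Qed.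

Lemma sumV_ge_term (l : list V) f y : (forall y, 0 <= f y) -> In y l -> f y <= sumV l f.
Proof.
  intros H; induction l; simpl; [tauto|].
  intros [->|Hin].
  - pose proof (sumV_nonneg l f H); lra.
  - specialize (IHl Hin); specialize (H a); lra.
Qed.

Lemma sumV_derive (l : list V) (f : R -> V -> R) f' t :
  (forall y, derivable_pt_lim (fun s => f s y) t (f' y)) ->
  derivable_pt_lim (fun s => sumV l (f s)) t (sumV l f').
Proof.
  intros H; induction l; simpl.
  - apply derivable_pt_lim_const.
  - apply (derivable_pt_lim_plus (fun s => f s a) (fun s => sumV l (f s))); auto.
Qed.

Lemma sumV_cont (l : list V) (f : R -> V -> R) t :
  (forall y, continuity_pt (fun s => f s y) t) ->
  continuity_pt (fun s => sumV l (f s)) t.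
Proof.
  intros H; induction l; simpl.
  - apply continuity_pt_const; intros ? ?; reflexivity.
  - apply (continuity_pt_plus (fun s => f s a) (fun s => sumV l (f s))); auto.
Qed.

Lemma finite_delta (l : list V) (Q : V -> R -> Prop) :
  (forall x, In x l -> exists d, 0 < d /\ forall r, r < d -> Q x r) ->
  exists d, 0 < d /\ forall x, In x l -> forall r, r < d -> Q x r.
Proof.
  induction l; intros H.
  - exists 1; split; [lra| intros x []].
  - destruct (H a (or_introl eq_refl)) as [d1 [Hd1 H1]].
    destruct IHl as [d2 [Hd2 H2]]. { intros x Hx; apply H; right; auto. }
    exists (Rmin d1 d2); split. { apply Rmin_glb_lt; auto. }
    intros x [<-|Hx] r Hr.
    + apply H1; pose proof (Rmin_l d1 d2); lra.
    + apply H2; auto; pose proof (Rmin_r d1 d2); lra.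
Qed.
End SumV.

Lemma deriv_sign_left (k : R -> R) t l d :
  derivable_pt_lim k t l -> 0 < d ->
  (forall s, t - d < s < t -> k s < k t) -> 0 <= l.
Proof.
  intros Hk Hd Hs. destruct (Rle_lt_dec 0 l) as [|Hl]; auto.
  destruct (Hk (- l / 2)) as [del Hdel]; [lra|].
  set (h := - Rmin del d / 2).
  assert (Hm : 0 < Rmin del d) by (apply Rmin_glb_lt; [apply cond_pos|auto]).
  assert (Hh0 : h <> 0) by (unfold h; lra).
  assert (Hh1 : Rabs h < del).
  { unfold h; rewrite Rabs_left by lra. pose proof (Rmin_l del d); lra. }
  specialize (Hdel h Hh0 Hh1).
  assert (Hk' : k (t + h) < k t) by (apply Hs; unfold h; pose proof (Rmin_r del d); lra).
  assert (Hq : 0 < (k (t + h) - k t) / h).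
  { assert (h < 0) by (unfold h; lra).
    replace ((k (t + h) - k t) / h) with ((k t - k (t + h)) / (- h)) by (field; lra).
    apply Rdiv_lt_0_compat; lra. }
  apply Rabs_def2 in Hdel. lra.
Qed.

Lemma mono_deriv (f f' : R -> R) a b :
  a <= b -> (forall c, a <= c <= b -> derivable_pt_lim f c (f' c)) ->
  (forall c, a <= c <= b -> 0 <= f' c) -> f a <= f b.
Proof.
  intros Hab Hd Hp. destruct (Req_dec a b) as [->|Hne]; [lra|].
  destruct (MVT_cor2 f f' a b) as [c [Hc1 Hc2]]; [lra|auto|].
  specialize (Hp c ltac:(lra)). nra.
Qed.

Lemma Upsilon_nonneg z : 0 <= Upsilon z.
Proof. unfold Upsilon; pose proof (exp_ineq1_le z); lra. Qed.

Lemma Upsilon_mono a b : 0 <= a -> a <= b -> Upsilon a <= Upsilon b.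
Proof.
  intros Ha Hab. apply (mono_deriv Upsilon (fun c => exp c - 1)); auto.
  - intros c _. apply is_derive_Reals. unfold Upsilon. auto_derive; auto; ring.
  - intros c Hc. pose proof (exp_ineq1_le c); lra.
Qed.

Lemma Upsilon_sq z : 0 <= z -> z ^ 2 / 2 <= Upsilon z.
Proof.
  intros Hz. assert (H : (fun h => Upsilon h - h ^ 2 / 2) 0 <= (fun h => Upsilon h - h ^ 2 / 2) z).
  { apply (mono_deriv (fun h => Upsilon h - h ^ 2 / 2) (fun c => exp c - 1 - c)); auto.
    - intros c _. apply is_derive_Reals. unfold Upsilon. auto_derive; auto; simpl; field.
    - intros c Hc. pose proof (exp_ineq1_le c); lra. }
  simpl in H. unfold Upsilon in *. rewrite exp_0 in H. lra.
Qed.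

Section Graph.
Context {V : Type}.

Lemma mu_le_max (enum : list V) mu x : In x enum -> mu x <= mu_max enum mu.
Proof.
  induction enum; simpl; [tauto|]. intros [->|H].
  - apply Rmax_l.
  - eapply Rle_trans; [apply IHenum; auto| apply Rmax_r].
Qed.

Lemma fold_Rmin_le a l x : In x (a :: l) -> fold_right Rmin a l <= x.
Proof.
  induction l; simpl.
  - intros [->|[]]; lra.
  - intros [->|[->|H]].
    + eapply Rle_trans; [apply Rmin_r| apply IHl; left; auto].
    + apply Rmin_l.
    + eapply Rle_trans; [apply Rmin_r| apply IHl; right; auto].
Qed.

Lemma fold_Rmin_pos a l : 0 < a -> (forall x, In x l -> 0 < x) -> 0 < fold_right Rmin a l.
Proof.
  intros Ha; induction l; simpl; auto. intros H.
  apply Rmin_glb_lt; auto.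
Qed.

Lemma in_edge_weights (enum : list V) w r :
  In r (edge_weights enum w) <-> exists x y, In x enum /\ In y enum /\ 0 < w x y /\ r = w x y.
Proof.
  unfold edge_weights. rewrite in_flat_map. split.
  - intros [x [Hx Hr]]. rewrite in_flat_map in Hr. destruct Hr as [y [Hy Hr]].
    destruct (Rlt_dec 0 (w x y)); simpl in Hr; [|tauto].
    destruct Hr as [<-|[]]. exists x, y; auto.
  - intros [x [y [Hx [Hy [Hw ->]]]]]. exists x; split; auto.
    rewrite in_flat_map. exists y; split; auto.
    destruct (Rlt_dec 0 (w x y)); [left; auto| lra].
Qed.

Lemma w_min_pos (enum : list V) w : 0 < w_min enum w.
Proof.
  unfold w_min. destruct (edge_weights enum w) eqn:E; [lra|].
  assert (Hall : forall x, In x (r :: l) -> 0 < x).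
  { intros x Hx. rewrite <- E in Hx. apply in_edge_weights in Hx.
    destruct Hx as [a [b [_ [_ [H ->]]]]]; auto. }
  apply fold_Rmin_pos; [apply Hall; left; auto| intros; apply Hall; right; auto].
Qed.

Lemma w_min_le (enum : list V) w x y :
  In x enum -> In y enum -> 0 < w x y -> w_min enum w <= w x y.
Proof.
  intros Hx Hy Hw. unfold w_min.
  assert (Hin : In (w x y) (edge_weights enum w)) by (apply in_edge_weights; eauto 6).
  destruct (edge_weights enum w); [destruct Hin|]. apply fold_Rmin_le; auto.
Qed.
End Graph.


Lemma cont_get f t : continuity_pt f t ->
  forall eps, 0 < eps -> exists d, 0 < d /\ forall h, Rabs h < d -> Rabs (f (t + h) - f t) < eps.
Proof.
  intros Hc eps He. destruct (Hc eps He) as [a [Ha H]]. exists a; split; [lra|].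
  intros h Hh. destruct (Req_dec h 0) as [->|Hn].
  - rewrite Rplus_0_r, Rminus_diag, Rabs_R0; lra.
  - apply (H (t + h)). split.
    + split; [exact I| intro E; apply Hn; lra].
    + simpl. unfold R_dist. replace (t + h - t) with h by ring. auto.
Qed.

Lemma cont_of_deriv f t l : derivable_pt_lim f t l -> continuity_pt f t.
Proof. intros H. apply derivable_continuous_pt. exists l. exact H. Qed.

Section Main.
Context {V : Type} (enum : list V) (w : V -> V -> R) (mu : V -> R)
  (F phi : R -> R) (u : R -> V -> R).
Context (Hg : weighted_graph enum w mu) (HCDf : CD_function F)
  (HCD : CD0 enum w mu F) (Hrel : relaxation_function F phi)
  (Hheat : heat_solution enum w mu u) (Hpos : forall t x, 0 <= t -> 0 < u t x).

Lemma mu_pos x : 0 < mu x.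
Proof. destruct Hg as (_ & _ & _ & _ & _ & H); auto. Qed.
Lemma w_nonneg x y : 0 <= w x y.
Proof. destruct Hg as (_ & _ & _ & H & _ & _); auto. Qed.
Lemma w_sym x y : w x y = w y x.
Proof. destruct Hg as (_ & _ & H & _ & _ & _); auto. Qed.
Lemma in_enum x : In x enum.
Proof. destruct Hg as (_ & H & _ & _ & _ & _); auto. Qed.

Definition vv t y := ln (u t y).
Definition LV t x := - Lap enum w mu (vv t) x.

Lemma dv t y : 0 < t ->
  derivable_pt_lim (fun s => ln (u s y)) t (PsiH enum w mu Upsilon' (vv t) y).
Proof.
  intros Ht.
  assert (H := derivable_pt_lim_comp (fun s => u s y) ln t _ _ (proj1 Hheat y t Ht)
     (derivable_pt_lim_ln _ (Hpos t y (Rlt_le _ _ Ht)))).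
  unfold comp in H. replace (PsiH enum w mu Upsilon' (vv t) y) with
    (/ u t y * Lap enum w mu (u t) y); auto.
  unfold PsiH, Lap. rewrite <- sumV_scal, <- sumV_scal, <- sumV_scal.
  apply sumV_ext. intros z. unfold Upsilon', vv.
  assert (E : exp (ln (u t z) - ln (u t y)) = u t z / u t y).
  { unfold Rminus; rewrite exp_plus, exp_Ropp, !exp_ln by (apply Hpos; lra). reflexivity. }
  rewrite E.
  assert (0 < u t y) by (apply Hpos; lra). pose proof (mu_pos y). field. split; lra.
Qed.

Lemma dLV t x : 0 < t ->
  derivable_pt_lim (fun s => LV s x) t (- Lap enum w mu (PsiH enum w mu Upsilon' (vv t)) x).
Proof.
  intros Ht. unfold LV, Lap.
  apply (derivable_pt_lim_opp (fun s => / mu x * sumV enum (fun y => w x y * (vv s y - vv s x)))).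
  apply (derivable_pt_lim_scal (fun s => sumV enum (fun y => w x y * (vv s y - vv s x)))).
  apply (sumV_derive enum (fun s y => w x y * (vv s y - vv s x))).
  intros y.
  apply (derivable_pt_lim_scal (fun s => vv s y - vv s x)).
  apply (derivable_pt_lim_minus (fun s => vv s y) (fun s => vv s x)); apply dv; auto.
Qed.

Lemma rcont_u y : continuity_pt (fun s => u (Rmax 0 s) y) 0.
Proof.
  destruct Hheat as [_ H2].
  destruct (H2 y 1 Rlt_0_1) as [d1 [Hd1 Hd]].
  set (L0 := Lap enum w mu (u 0) y) in *.
  intros eps He. exists (Rmin d1 (eps / (Rabs L0 + 1))).
  assert (HA : 0 < Rabs L0 + 1) by (pose proof (Rabs_pos L0); lra).
  split. { apply Rmin_glb_lt; auto. apply Rdiv_lt_0_compat; lra. }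
  intros s [_ Hs]. simpl in *. unfold R_dist in *. rewrite Rminus_0_r in Hs.
  rewrite (Rmax_left 0 0) by lra.
  destruct (Rle_dec s 0) as [Hs0|Hs0].
  - rewrite Rmax_left by lra. rewrite Rminus_diag, Rabs_R0; lra.
  - rewrite Rmax_right by lra. rewrite Rabs_right in Hs by lra.
    assert (Hs1 : s < d1) by (pose proof (Rmin_l d1 (eps / (Rabs L0 + 1))); lra).
    assert (Hs2 : s < eps / (Rabs L0 + 1)) by (pose proof (Rmin_r d1 (eps / (Rabs L0 + 1))); lra).
    specialize (Hd s ltac:(lra)). fold L0 in Hd.
    assert (Hq : Rabs ((u s y - u 0 y) / s) < Rabs L0 + 1).
    { replace ((u s y - u 0 y) / s) with (((u s y - u 0 y) / s - L0) + L0) by ring.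
      pose proof (Rabs_triang ((u s y - u 0 y) / s - L0) L0); lra. }
    replace (u s y - u 0 y) with (s * ((u s y - u 0 y) / s)) by (field; lra).
    rewrite Rabs_mult, (Rabs_right s) by lra.
    apply Rlt_le_trans with (s * (Rabs L0 + 1)).
    + apply Rmult_lt_compat_l; lra.
    + apply Rmult_lt_compat_r with (r := Rabs L0 + 1) in Hs2; [|lra].
      unfold Rdiv in Hs2. rewrite Rmult_assoc, Rinv_l in Hs2 by lra. lra.
Qed.

Definition LV0 s x := - Lap enum w mu (fun y => ln (u (Rmax 0 s) y)) x.

Lemma LV0_cont x : continuity_pt (fun s => LV0 s x) 0.
Proof.
  assert (Hl : forall y, continuity_pt (fun s => ln (u (Rmax 0 s) y)) 0).
  { intros y. apply (continuity_pt_comp (fun s => u (Rmax 0 s) y) ln); [apply rcont_u|].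
    apply (cont_of_deriv _ _ _ (derivable_pt_lim_ln _ (Hpos _ y (Rmax_l 0 0)))). }
  unfold LV0, Lap.
  apply (continuity_pt_opp (fun s => / mu x * sumV enum (fun y => w x y * (ln (u (Rmax 0 s) y) - ln (u (Rmax 0 s) x))))).
  apply (continuity_pt_scal (fun s => sumV enum (fun y => w x y * (ln (u (Rmax 0 s) y) - ln (u (Rmax 0 s) x))))).
  apply (sumV_cont enum (fun s y => w x y * (ln (u (Rmax 0 s) y) - ln (u (Rmax 0 s) x)))).
  intros y.
  apply (continuity_pt_scal (fun s => ln (u (Rmax 0 s) y) - ln (u (Rmax 0 s) x))).
  apply (continuity_pt_minus (fun s => ln (u (Rmax 0 s) y)) (fun s => ln (u (Rmax 0 s) x))); auto.
Qed.

Lemma LV0_eq s x : 0 < s -> LV0 s x = LV s x.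
Proof. intros Hs. unfold LV0, LV, vv. rewrite Rmax_right by lra. reflexivity. Qed.

Lemma near_zero lam : 1 < lam ->
  exists d, 0 < d /\ forall x t, 0 < t < d -> LV t x < phi (t / lam).
Proof.
  intros Hlam.
  destruct (finite_delta enum (fun x r => 0 < r -> LV r x < phi (r / lam))) as [d [Hd H]].
  - intros x _.
    destruct (cont_get _ _ (LV0_cont x) 1 Rlt_0_1) as [d1 [Hd1 H1]].
    destruct Hrel as (_ & _ & H3).
    destruct (H3 (LV0 0 x + 1)) as [d2 [Hd2 H2]].
    exists (Rmin d1 d2). split; [apply Rmin_glb_lt; auto|].
    intros r Hr Hr0.
    pose proof (Rmin_l d1 d2); pose proof (Rmin_r d1 d2).
    specialize (H1 r ltac:(rewrite Rabs_right; lra)). rewrite Rplus_0_l in H1.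
    rewrite <- LV0_eq by lra.
    apply Rabs_def2 in H1.
    assert (Hq : 0 < r / lam < d2).
    { split; [apply Rdiv_lt_0_compat; lra|].
      apply Rle_lt_trans with r; [|lra].
      apply Rmult_le_reg_r with lam; [lra|]. unfold Rdiv. rewrite Rmult_assoc, Rinv_l by lra. nra. }
    specialize (H2 _ Hq). lra.
  - exists d; split; auto. intros x t Ht. apply (H x (in_enum x)); lra.
Qed.

Lemma F_pos y : 0 < y -> 0 < F y.
Proof.
  intros Hy. destruct HCDf as (_ & _ & _ & H4 & H5 & _).
  specialize (H5 (y / 2) y ltac:(lra) ltac:(lra)).
  specialize (H4 (y / 2) ltac:(lra)).
  assert (0 <= F (y / 2) / (y / 2)) by (apply Rdiv_le_0_compat; lra).
  assert (0 < F y / y) by lra.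
  replace (F y) with ((F y / y) * y) by (field; lra). nra.
Qed.

Lemma dg lam t : 0 < lam -> 0 < t ->
  derivable_pt_lim (fun s => phi (s / lam)) t (- F (phi (t / lam)) / lam).
Proof.
  intros Hl Ht. destruct Hrel as (_ & H2 & _).
  assert (Ha : derivable_pt_lim (fun s => s / lam) t (/ lam)).
  { apply is_derive_Reals. auto_derive; auto. field; lra. }
  assert (Hb := derivable_pt_lim_comp _ phi t _ _ Ha (H2 (t / lam) ltac:(apply Rdiv_lt_0_compat; lra))).
  unfold comp in Hb. replace (- F (phi (t / lam)) / lam) with (- F (phi (t / lam)) * / lam) by (field; lra).
  exact Hb.
Qed.

Lemma LiYau_lam lam : 1 < lam -> forall t x, 0 < t -> LV t x < phi (t / lam).
Proof.
  intros Hlam. apply NNPP. intro Hc.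
  destruct (not_all_ex_not _ _ Hc) as [T HT].
  destruct (not_all_ex_not _ _ HT) as [x0 Hx0].
  apply imply_to_and in Hx0. destruct Hx0 as [HT0 Hx0]. apply Rnot_lt_le in Hx0.
  set (f := fun x s => LV s x - phi (s / lam)).
  assert (Hfc : forall x s, 0 < s -> continuity_pt (f x) s).
  { intros x s Hs. apply (cont_of_deriv _ _ (- Lap enum w mu (PsiH enum w mu Upsilon' (vv s)) x - (- F (phi (s / lam)) / lam))).
    apply (derivable_pt_lim_minus (fun s => LV s x) (fun s => phi (s / lam))).
    - apply dLV; auto.
    - apply dg; lra. }
  destruct (near_zero lam Hlam) as [d0 [Hd0 Hnz]].
  set (E := fun s => 0 < s /\ forall t, 0 < t <= s -> forall x, f x t < 0).
  set (a := Rmin d0 T / 2).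
  assert (Ha : 0 < a < d0 /\ a < T).
  { unfold a. pose proof (Rmin_l d0 T); pose proof (Rmin_r d0 T).
    assert (0 < Rmin d0 T) by (apply Rmin_glb_lt; auto). lra. }
  assert (HEa : E a).
  { split; [lra|]. intros t Ht x. unfold f. pose proof (Hnz x t ltac:(lra)). lra. }
  assert (HEb : forall s, E s -> s <= T).
  { intros s [_ Hs]. apply Rnot_lt_le. intro Hl. specialize (Hs T ltac:(lra) x0). unfold f in Hs. lra. }
  destruct (completeness E) as [m [Hub Hlub]].
  { exists T. intros s Hs. apply HEb; auto. }
  { exists a; auto. }
  assert (Hma : a <= m) by (apply Hub; auto).
  assert (Hbelow : forall t, 0 < t < m -> forall x, f x t < 0).
  { intros t Ht x. destruct (classic (exists s, E s /\ t < s)) as [[s [[_ Hs] Hts]]|Hn].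
    - apply Hs; lra.
    - exfalso. assert (m <= t); [|lra]. apply Hlub. intros s Hs.
      apply Rnot_lt_le. intro Hl. apply Hn. exists s; auto. }
  assert (Hle : forall y, f y m <= 0).
  { intros y. apply Rnot_lt_le. intro Hp.
    destruct (cont_get _ _ (Hfc y m ltac:(lra)) (f y m) Hp) as [d [Hd H]].
    set (h := - Rmin d m / 2).
    assert (0 < Rmin d m) by (apply Rmin_glb_lt; lra).
    pose proof (Rmin_l d m); pose proof (Rmin_r d m).
    specialize (H h ltac:(unfold h; rewrite Rabs_left; lra)).
    specialize (Hbelow (m + h) ltac:(unfold h; lra) y).
    apply Rabs_def2 in H. lra. }
  assert (Hex : exists x, 0 <= f x m).
  { apply NNPP. intro Hn.
    assert (Hall : forall x, f x m < 0).
    { intros x. apply Rnot_le_lt. intro Hx. apply Hn. exists x; auto. }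
    destruct (finite_delta enum (fun x r => 0 <= r -> f x (m + r) < 0)) as [d [Hd H]].
    { intros x _. destruct (cont_get _ _ (Hfc x m ltac:(lra)) (- f x m) ltac:(specialize (Hall x); lra)) as [d [Hd H]].
      exists d; split; auto. intros r Hr Hr0. specialize (H r ltac:(rewrite Rabs_right; lra)).
      apply Rabs_def2 in H. lra. }
    assert (HE : E (m + d / 2)).
    { split; [lra|]. intros t Ht x. destruct (Rlt_le_dec t m).
      - apply Hbelow; lra.
      - replace t with (m + (t - m)) by ring. apply (H x (in_enum x)); lra. }
    specialize (Hub _ HE). lra. }
  destruct Hex as [xs Hxs].
  assert (Hz : f xs m = 0) by (specialize (Hle xs); lra).
  assert (Hder : derivable_pt_lim (f xs) m (- Lap enum w mu (PsiH enum w mu Upsilon' (vv m)) xs - (- F (phi (m / lam)) / lam))).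
  { apply (derivable_pt_lim_minus (fun s => LV s xs) (fun s => phi (s / lam))).
    - apply dLV; lra.
    - apply dg; lra. }
  pose proof (deriv_sign_left (f xs) m _ m Hder ltac:(lra)) as Hs.
  assert (Hs' : 0 <= - Lap enum w mu (PsiH enum w mu Upsilon' (vv m)) xs - (- F (phi (m / lam)) / lam)).
  { apply Hs. intros s Hs1. rewrite Hz. apply Hbelow; lra. }
  assert (Hp : 0 < phi (m / lam)).
  { destruct Hrel as (H1 & _). apply H1. apply Rdiv_lt_0_compat; lra. }
  assert (HLV : LV m xs = phi (m / lam)) by (unfold f in Hz; lra).
  assert (HCDx := HCD xs (vv m)).
  fold (LV m xs) in HCDx. rewrite HLV in HCDx.
  specialize (HCDx Hp).
  assert (HCDy : forall y, adj w xs y -> LV m y <= phi (m / lam)).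
  { intros y _. specialize (Hle y). unfold f in Hle. lra. }
  specialize (HCDx HCDy).
  pose proof (F_pos _ Hp) as HF.
  set (q := F (phi (m / lam)) / lam) in *.
  assert (Hq : F (phi (m / lam)) = q * lam) by (unfold q; field; lra).
  assert (0 < q) by (unfold q; apply Rdiv_lt_0_compat; lra).
  replace (- F (phi (m / lam)) / lam) with (- q) in Hs' by (unfold q; field; lra).
  nra.
Qed.

Lemma LiYau t x : 0 < t -> LV t x <= phi t.
Proof.
  intros Ht. apply Rnot_lt_le. intro Hc.
  destruct Hrel as (_ & H2 & _).
  destruct (cont_get _ _ (cont_of_deriv _ _ _ (H2 t Ht)) (LV t x - phi t) ltac:(lra)) as [d [Hd H]].
  set (lam := (2 * t + d) / (2 * t)).
  assert (Hlam : 1 < lam).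
  { unfold lam. apply Rmult_lt_reg_r with (2 * t); [lra|]. field_simplify; lra. }
  pose proof (LiYau_lam lam Hlam t x Ht) as HL.
  set (h := - (t * d) / (2 * t + d)).
  assert (Hh : t / lam = t + h) by (unfold lam, h; field; lra).
  assert (Hh2 : Rabs h < d).
  { unfold h. rewrite Rabs_left.
    - apply Rmult_lt_reg_r with (2 * t + d); [lra|]. field_simplify; nra.
    - apply Ropp_lt_cancel. rewrite Ropp_0. unfold Rdiv. rewrite Ropp_mult_distr_l, Ropp_involutive.
      apply Rmult_lt_0_compat; [nra| apply Rinv_0_lt_compat; lra]. }
  specialize (H h Hh2). rewrite <- Hh in H. apply Rabs_def2 in H. lra.
Qed.

Lemma dv_bound t x y : 0 < t -> 0 < w x y ->
  - phi t + w x y / mu x * Upsilon (vv t y - vv t x) <= PsiH enum w mu Upsilon' (vv t) x.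
Proof.
  intros Ht Hw.
  assert (E : PsiH enum w mu Upsilon' (vv t) x =
     Lap enum w mu (vv t) x + / mu x * sumV enum (fun z => w x z * Upsilon (vv t z - vv t x))).
  { unfold PsiH, Lap. rewrite <- Rmult_plus_distr_l, <- sumV_plus. f_equal.
    apply sumV_ext. intros z. unfold Upsilon', Upsilon. ring. }
  rewrite E. pose proof (LiYau t x Ht) as HL. unfold LV in HL.
  assert (Hs : w x y * Upsilon (vv t y - vv t x) <= sumV enum (fun z => w x z * Upsilon (vv t z - vv t x))).
  { apply (sumV_ge_term enum (fun z => w x z * Upsilon (vv t z - vv t x))); [|apply in_enum].
    intros z. apply Rmult_le_pos; [apply w_nonneg| apply Upsilon_nonneg]. }
  pose proof (mu_pos x).
  assert (w x y / mu x * Upsilon (vv t y - vv t x) <= / mu x * sumV enum (fun z => w x z * Upsilon (vv t z - vv t x))).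
  { unfold Rdiv. rewrite (Rmult_comm (w x y)), Rmult_assoc. apply Rmult_le_compat_l; [|auto].
    left; apply Rinv_0_lt_compat; auto. }
  lra.
Qed.

Lemma phi_cont s : 0 < s -> continuity_pt phi s.
Proof. intros Hs. destruct Hrel as (_ & H2 & _). exact (cont_of_deriv _ _ _ (H2 s Hs)). Qed.

Lemma phi_exRInt a b : 0 < a -> 0 < b -> ex_RInt phi a b.
Proof.
  intros Ha Hb. apply (@ex_RInt_continuous R_CompleteNormedModule). intros z Hz.
  apply continuity_pt_filterlim. apply phi_cont.
  assert (0 < Rmin a b) by (apply Rmin_glb_lt; auto). lra.
Qed.

Definition Phi s := RInt phi 1 s.

Lemma dPhi s : 0 < s -> derivable_pt_lim Phi s (phi s).
Proof.
  intros Hs. apply is_derive_Reals. unfold Phi. apply (@is_derive_RInt R_CompleteNormedModule phi (fun b => RInt phi 1 b) 1 s).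
  - exists (mkposreal (s / 2) ltac:(lra)). intros b Hb.
    apply RInt_correct. apply phi_exRInt; [lra|].
    unfold ball in Hb; simpl in Hb; unfold AbsRing_ball, abs, minus, plus, opp in Hb; simpl in Hb.
    apply Rabs_def2 in Hb. lra.
  - apply continuity_pt_filterlim. apply phi_cont; auto.
Qed.

Definition GG s x := vv s x + Phi s.

Lemma dGG s x : 0 < s -> derivable_pt_lim (fun r => GG r x) s (PsiH enum w mu Upsilon' (vv s) x + phi s).
Proof.
  intros Hs. apply (derivable_pt_lim_plus (fun r => vv r x) Phi).
  - apply dv; auto.
  - apply dPhi; auto.
Qed.

Definition c0 := w_min enum w / mu_max enum mu.

Lemma c0_pos (x0 : V) : 0 < c0.
Proof.
  unfold c0. apply Rdiv_lt_0_compat; [apply w_min_pos|].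
  apply Rlt_le_trans with (mu x0); [apply mu_pos|]. apply mu_le_max, in_enum.
Qed.

Lemma dGG_bound s x y : 0 < s -> 0 < w x y ->
  c0 * Upsilon (GG s y - GG s x) <= PsiH enum w mu Upsilon' (vv s) x + phi s.
Proof.
  intros Hs Hw. pose proof (dv_bound s x y Hs Hw).
  replace (GG s y - GG s x) with (vv s y - vv s x) by (unfold GG; ring).
  assert (c0 <= w x y / mu x).
  { unfold c0. pose proof (mu_pos x). pose proof (w_min_pos enum w).
    pose proof (w_min_le enum w x y (in_enum x) (in_enum y) Hw).
    pose proof (mu_le_max enum mu x (in_enum x)).
    apply Rle_trans with (w_min enum w / mu x).
    - unfold Rdiv. apply Rmult_le_compat_l; [lra|]. apply Rinv_le_contravar; lra.
    - unfold Rdiv. apply Rmult_le_compat_r; [left; apply Rinv_0_lt_compat|]; lra. }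
  pose proof (Upsilon_nonneg (vv s y - vv s x)). nra.
Qed.

Lemma dGG_nonneg s x : 0 < s -> 0 <= PsiH enum w mu Upsilon' (vv s) x + phi s.
Proof.
  intros Hs. unfold PsiH.
  assert (E : PsiH enum w mu Upsilon' (vv s) x =
     Lap enum w mu (vv s) x + / mu x * sumV enum (fun z => w x z * Upsilon (vv s z - vv s x))).
  { unfold PsiH, Lap. rewrite <- Rmult_plus_distr_l, <- sumV_plus. f_equal.
    apply sumV_ext. intros z. unfold Upsilon', Upsilon. ring. }
  unfold PsiH in E. rewrite E. pose proof (LiYau s x Hs) as HL. unfold LV in HL.
  assert (0 <= / mu x * sumV enum (fun z => w x z * Upsilon (vv s z - vv s x))).
  { apply Rmult_le_pos; [left; apply Rinv_0_lt_compat, mu_pos|].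
    apply sumV_nonneg. intros z. apply Rmult_le_pos; [apply w_nonneg| apply Upsilon_nonneg]. }
  lra.
Qed.

Lemma GG_mono x a b : 0 < a -> a <= b -> GG a x <= GG b x.
Proof.
  intros Ha Hab. apply (mono_deriv (fun r => GG r x) (fun r => PsiH enum w mu Upsilon' (vv r) x + phi r)); auto.
  - intros c Hc. apply dGG; lra.
  - intros c Hc. apply dGG_nonneg; lra.
Qed.

Lemma step x z a b : 0 < a < b -> 0 < w x z ->
  GG a x - GG b z <= 2 / (c0 * (b - a)).
Proof.
  intros Hab Hw. pose proof (c0_pos x) as Hc.
  assert (Hpos2 : 0 < 2 / (c0 * (b - a))) by (apply Rdiv_lt_0_compat; [lra| apply Rmult_lt_0_compat; lra]).
  destruct (Rle_lt_dec (GG a x - GG b z) 0) as [|Hb]; [lra|].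
  set (H := fun s => GG a x - GG s z).
  assert (HH : forall s, a <= s <= b -> GG a x - GG b z <= H s).
  { intros s Hs. unfold H. pose proof (GG_mono z s b ltac:(lra) ltac:(lra)). lra. }
  set (D := fun s => PsiH enum w mu Upsilon' (vv s) z + phi s).
  assert (Hwz : 0 < w z x) by (rewrite w_sym; auto).
  assert (HD : forall s, a <= s <= b -> c0 * (H s ^ 2 / 2) <= D s).
  { intros s Hs. unfold D. eapply Rle_trans; [|apply (dGG_bound s z x); lra].
    apply Rmult_le_compat_l; [lra|]. eapply Rle_trans; [apply Upsilon_sq|].
    - pose proof (HH s Hs); lra.
    - apply Upsilon_mono; [pose proof (HH s Hs); lra|].
      unfold H. pose proof (GG_mono x a s ltac:(lra) ltac:(lra)). lra. }
  assert (HHp : forall s, a <= s <= b -> 0 < H s) by (intros s Hs; pose proof (HH s Hs); lra).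
  assert (HK : (fun s => / H s - c0 / 2 * s) a <= (fun s => / H s - c0 / 2 * s) b).
  { apply (mono_deriv (fun s => / H s - c0 / 2 * s) (fun s => D s / (H s)² - c0 / 2)); [lra| |].
    - intros c Hc'.
      assert (HdH : derivable_pt_lim H c (0 - D c)).
      { apply (derivable_pt_lim_minus (fun _ => GG a x) (fun s => GG s z));
          [apply derivable_pt_lim_const| apply dGG; lra]. }
      assert (Hdiv := derivable_pt_lim_div (fun _ => 1) H c 0 (0 - D c)
          (derivable_pt_lim_const 1 c) HdH ltac:(specialize (HHp c Hc'); lra)).
      assert (Hd1 : derivable_pt_lim (fun s => / H s) c (D c / (H c)²)).
      { replace (D c / (H c)²) with ((0 * H c - (0 - D c) * 1) / (H c)²) by (unfold Rdiv; ring).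
        intros eps Heps. destruct (Hdiv eps Heps) as [del Hdel]. exists del.
        intros h Hh0 Hh. specialize (Hdel h Hh0 Hh). unfold div_fct in Hdel.
        replace ((/ H (c + h) - / H c) / h) with ((1 / H (c + h) - 1 / H c) / h) by (unfold Rdiv; ring).
        exact Hdel. }
      apply (derivable_pt_lim_minus (fun s => / H s) (fun s => c0 / 2 * s)); auto.
      apply is_derive_Reals. auto_derive; auto. ring.
    - intros c Hc'. pose proof (HHp c Hc'). pose proof (HD c Hc').
      assert (c0 / 2 <= D c / (H c)²); [|lra].
      unfold Rsqr. apply Rmult_le_reg_r with (H c * H c); [nra|].
      unfold Rdiv. rewrite (Rmult_assoc (D c)), Rinv_l by nra. nra. }
  simpl in HK.
  pose proof (HHp a ltac:(lra)) as Ha. pose proof (HHp b ltac:(lra)) as Hbb.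
  assert (0 < / H a) by (apply Rinv_0_lt_compat; lra).
  assert (HKb : c0 * (b - a) / 2 < / H b) by lra.
  assert (Hx : 0 < c0 * (b - a) / 2) by (apply Rdiv_lt_0_compat; [apply Rmult_lt_0_compat|]; lra).
  pose proof (Rinv_lt_contravar (c0 * (b - a) / 2) (/ H b) ltac:(apply Rmult_lt_0_compat; [exact Hx| lra]) HKb) as Hi.
  rewrite Rinv_inv in Hi.
  replace (/ (c0 * (b - a) / 2)) with (2 / (c0 * (b - a))) in Hi by (field; split; lra).
  unfold H in Hi. lra.
Qed.


Lemma walk_bound n x y : walk w x y n -> forall a b, 0 < a < b ->
  GG a x - GG b y <= 2 * (INR n) ^ 2 / (c0 * (b - a)).
Proof.
  induction 1 as [x|x z y n Hadj Hw IH]; intros a b Hab.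
  - pose proof (GG_mono x a b ltac:(lra) ltac:(lra)).
    replace (2 * INR 0 ^ 2 / (c0 * (b - a))) with 0 by (simpl; unfold Rdiv; ring). lra.
  - pose proof (c0_pos x) as Hc.
    destruct n as [|n].
    + inversion Hw; subst.
      replace (2 * INR 1 ^ 2 / (c0 * (b - a))) with (2 / (c0 * (b - a))) by (simpl; field; split; lra).
      apply step; auto.
    + set (N := INR (S n)).
      assert (HN : 0 < N) by (unfold N; apply lt_0_INR; lia).
      set (a' := a + (b - a) / (N + 1)).
      assert (Ha' : a < a' < b).
      { unfold a'. split.
        - assert (0 < (b - a) / (N + 1)) by (apply Rdiv_lt_0_compat; lra). lra.
        - assert ((b - a) / (N + 1) < b - a); [|lra].
          apply Rmult_lt_reg_r with (N + 1); [lra|]. unfold Rdiv.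
          rewrite Rmult_assoc, Rinv_l by lra. nra. }
      pose proof (step x z a a' ltac:(lra) Hadj) as H1.
      specialize (IH a' b ltac:(lra)). fold N in IH.
      rewrite S_INR. fold N.
      assert (E : 2 / (c0 * (a' - a)) + 2 * N ^ 2 / (c0 * (b - a')) = 2 * (N + 1) ^ 2 / (c0 * (b - a))).
      { assert (E1 : a' - a = (b - a) / (N + 1)) by (unfold a'; ring).
        assert (E2 : b - a' = (b - a) * N / (N + 1)) by (unfold a'; field; lra).
        rewrite E1, E2. field. repeat split; intro Hz; nra. }
      lra.
Qed.

Lemma main_ineq : forall (t1 t2 : R) (x1 x2 : V) (d : nat) (pr : Riemann_integrable phi t1 t2),
    0 < t1 -> t1 < t2 ->
    is_dist w x1 x2 d ->
    u t1 x1 <= u t2 x2 * exp (RiemannInt pr)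
               * exp (2 * mu_max enum mu * (INR d) ^ 2 / (w_min enum w * (t2 - t1))).
Proof.
  intros t1 t2 x1 x2 d pr Ht1 Ht12 [Hw _].
  pose proof (walk_bound d x1 x2 Hw t1 t2 ltac:(lra)) as HB.
  pose proof (c0_pos x1) as Hc.
  assert (HI : Phi t2 - Phi t1 = RiemannInt pr).
  { rewrite <- RInt_Reals. unfold Phi.
    rewrite <- (RInt_Chasles phi 1 t1 t2); [|apply phi_exRInt; lra| apply phi_exRInt; lra].
    unfold plus; simpl. ring. }
  assert (HM : 2 * mu_max enum mu * (INR d) ^ 2 / (w_min enum w * (t2 - t1)) = 2 * (INR d) ^ 2 / (c0 * (t2 - t1))).
  { unfold c0. pose proof (w_min_pos enum w).
    assert (0 < mu_max enum mu).
    { apply Rlt_le_trans with (mu x1); [apply mu_pos| apply mu_le_max, in_enum]. }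
    field. repeat split; intro Hz; nra. }
  rewrite HM, <- HI.
  unfold GG, vv in HB.
  assert (Hu1 := Hpos t1 x1 ltac:(lra)). assert (Hu2 := Hpos t2 x2 ltac:(lra)).
  rewrite <- (exp_ln (u t1 x1)) by auto. rewrite <- (exp_ln (u t2 x2)) at 1 by auto.
  rewrite <- !exp_plus.
  destruct (Rle_lt_or_eq_dec (ln (u t1 x1)) (ln (u t2 x2) + (Phi t2 - Phi t1) + 2 * INR d ^ 2 / (c0 * (t2 - t1)))) as [Hl|Hl].
  - lra.
  - left; apply exp_increasing; auto.
  - right; rewrite Hl; reflexivity.
Qed.
End Main.

Theorem theorem1p2 (V : Type) (enum : list V) (w : V -> V -> R) (mu : V -> R)
  (F phi : R -> R) (u : R -> V -> R) :
  weighted_graph enum w mu ->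
  connected w ->
  CD_function F ->
  CD0 enum w mu F ->
  relaxation_function F phi ->
  heat_solution enum w mu u ->
  (forall t x, 0 <= t -> 0 < u t x) ->
  forall (t1 t2 : R) (x1 x2 : V) (d : nat) (pr : Riemann_integrable phi t1 t2),
    0 < t1 -> t1 < t2 ->
    is_dist w x1 x2 d ->
    u t1 x1 <= u t2 x2 * exp (RiemannInt pr)
               * exp (2 * mu_max enum mu * (INR d) ^ 2 / (w_min enum w * (t2 - t1))).
Proof.
  intros Hg _ HCDf HCD Hrel Hheat Hpos.
  exact (main_ineq enum w mu F phi u Hg HCDf HCD Hrel Hheat Hpos).
Qed.
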